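(* Let $R$ be a tree and let $X\subseteq V(R)$ with $|X|=n$ even. Call a partition $\{X_1,\dots,X_{n/2}\}$ of $X$ into sets of size two feasible if there are $n/2$ pairwise vertex-disjoint paths $P_1,\dots,P_{n/2}$ of $R$ such that for each $i$ the ends of $P_i$ are the two members of $X_i$. Then there is at most one feasible partition of $X$. *)

(* Defs.v *)
From mathcomp Require Import all_boot.
Set Implicit Arguments. Unset Strict Implicit. Unset Printing Implicit Defensive.

Section Graphs.
Variable T : finType.
Variable e : rel T.

Definition simple_graph : Prop := symmetric e /\ irreflexive e.

(* A path of the graph given by its first vertex x and remaining vertices s:
   consecutive vertices adjacent, all vertices distinct.
   Its ends are x and (last x s); its vertex set is x :: s. *)
Definition gpath (x : T) (s : seq T) : bool := path e x s && uniq (x :: s).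

(* no cycle: no path with at least 3 vertices whose ends are adjacent *)
Definition acyclic : Prop :=
  forall (x : T) (s : seq T), 2 <= size s -> gpath x s -> ~~ e (last x s) x.

Definition connected : Prop := forall x y : T, connect e x y.

Definition is_tree : Prop := simple_graph /\ connected /\ acyclic.

Definition pair_partition (X : {set T}) (P : {set {set T}}) : Prop :=
  partition P X /\ (forall B, B \in P -> #|B| = 2).

Definition feasible (P : {set {set T}}) : Prop :=
  exists f : {set T} -> T * seq T,
    (forall B, B \in P -> gpath (f B).1 (f B).2 /\
                          [set (f B).1; last (f B).1 (f B).2] = B) /\
    (forall B1 B2, B1 \in P -> B2 \in P -> B1 != B2 ->
       [disjoint ((f B1).1 :: (f B1).2) & ((f B2).1 :: (f B2).2)]).
End Graphs.

(* Main.v *)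
Require Import Defs.
From mathcomp Require Import all_boot.
Set Implicit Arguments. Unset Strict Implicit. Unset Printing Implicit Defensive.
Section Seqs.
Variable T : eqType.

Definition consec (l : seq T) a b := exists l1 l2, l = l1 ++ a :: b :: l2.

Lemma consec_mem l a b : consec l a b -> a \in l /\ b \in l.
Proof.
by case=> l1 [l2 ->]; rewrite !mem_cat !inE !eqxx /= !orbT.
Qed.

Lemma consec_rev l a b : consec l a b -> consec (rev l) b a.
Proof.
case=> l1 [l2 ->]; exists (rev l2), (rev l1).
by rewrite rev_cat !rev_cons -!cats1 -!catA.
Qed.

Lemma uniq_split (l1 : seq T) w r1 l2 r2 :
  uniq (l1 ++ w :: r1) -> l1 ++ w :: r1 = l2 ++ w :: r2 -> l1 = l2 /\ r1 = r2.
Proof.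
move=> U E.
have U2 : uniq (l2 ++ w :: r2) by rewrite -E.
have n1 : w \notin l1.
  by move: U; rewrite cat_uniq => /and3P[_ /hasPn H _]; apply: H; rewrite inE eqxx.
have n2 : w \notin l2.
  by move: U2; rewrite cat_uniq => /and3P[_ /hasPn H _]; apply: H; rewrite inE eqxx.
have Hi : size l1 = size l2.
  have := congr1 (index w) E.
  by rewrite !index_cat (negbTE n1) (negbTE n2) /= eqxx !addn0.
split.
  by rewrite -(take_size_cat (w :: r1) (erefl (size l1))) E take_size_cat.
have := congr1 (drop (size l1)) E.
by rewrite drop_size_cat // drop_size_cat // => [[]].
Qed.

Definition interior_ok (inX : pred T) (l : seq T) :=
  forall l1 w l2, l = l1 ++ w :: l2 -> l1 != [::] -> l2 != [::] -> ~~ inX w.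

Lemma interior_rev inX l : interior_ok inX l -> interior_ok inX (rev l).
Proof.
move=> H l1 w l2 E n1 n2.
apply: (H (rev l2) w (rev l1)).
- by rewrite -(revK l) E rev_cat rev_cons cat_rcons.
- by rewrite -size_eq0 size_rev size_eq0.
- by rewrite -size_eq0 size_rev size_eq0.
Qed.

Lemma walk (O : rel T) (inX : pred T) x s t :
  uniq (x :: s) -> uniq (x :: t) ->
  (forall w d, w \in x :: s -> O w d -> consec (x :: s) w d \/ consec (x :: s) d w) ->
  (forall c d, consec (x :: t) c d -> O c d) ->
  interior_ok inX (x :: s) -> interior_ok inX (x :: t) ->
  inX (last x s) -> inX (last x t) -> last x s != x -> last x t != x ->
  last x s = last x t.
Proof.
move=> Us Ut Hs Ht Is It Xs Xt Ns Nt.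
suff H : forall t1 pre w s1, x :: s = rcons pre w ++ s1 -> x :: t = rcons pre w ++ t1 ->
    last w s1 = last w t1.
  have := H t [::] x s erefl erefl; done.
elim=> [|d t2 IH] pre w s1 Es Et.
  case: s1 Es => [//|d s2] Es.
  have Lt : last x t = w.
    by rewrite -(last_cons x x t) Et cats0 last_rcons.
  case: pre Es Et => [|y pre'] Es Et.
    by move: Et => /= [_ tnil]; move: Nt; rewrite tnil /= eqxx.
  exfalso; move: Xt; rewrite Lt; apply/negP.
  by apply: (Is (y :: pre') w (d :: s2)) => //; rewrite Es cat_rcons.
have Et' : x :: t = pre ++ w :: d :: t2 by rewrite Et cat_rcons.
have Es' : x :: s = pre ++ w :: s1 by rewrite Es cat_rcons.
have Owd : O w d by apply: Ht; exists pre, t2.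
have ws : w \in x :: s by rewrite Es' mem_cat inE eqxx orbT.
case: (Hs w d ws Owd) => [[l1 [l2 E]] | [l1 [l2 E]]].
  have U' : uniq (pre ++ w :: s1) by rewrite -Es'.
  have [_ E2] := uniq_split U' (etrans (esym Es') E).
  rewrite E2 /=; apply: (IH (rcons pre w)).
    by rewrite Es' E2 !cat_rcons.
  by rewrite Et' !cat_rcons.
have U' : uniq (pre ++ w :: s1) by rewrite -Es'.
have [E1 _] := uniq_split U' (etrans (esym Es') (etrans E (esym (cat_rcons d l1 (w :: l2))))).
exfalso; move: Ut; rewrite Et' E1 cat_uniq => /and3P[_ /hasPn H _].
have := H d; rewrite !inE eqxx orbT mem_rcons inE eqxx => /(_ isT).
by [].
Qed.
End Seqs.


Section Parity.
Variable T : finType.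
Variables (X S : {set T}) (R : {set {set T}}).
Hypothesis HP : partition R X.
Hypothesis H2 : forall B, B \in R -> #|B| = 2.
Hypothesis Hu : forall B1 B2, B1 \in R -> B2 \in R ->
  #|B1 :&: S| = 1 -> #|B2 :&: S| = 1 -> B1 = B2.

Lemma cardIS A : #|A :&: S| = \sum_(x in A | x \in S) 1.
Proof. by rewrite sum1dep_card; apply: eq_card => x; rewrite !inE. Qed.

Lemma even_other B : B \in R -> #|B :&: S| != 1 -> 2 %| #|B :&: S|.
Proof.
move=> BR n1.
have : #|B :&: S| <= 2 by rewrite -(H2 BR); apply: subset_leq_card; apply: subsetIl.
by case: #|B :&: S| n1 => [|[|[|]]].
Qed.

Lemma parity : odd #|X :&: S| = [exists B in R, #|B :&: S| == 1].
Proof.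
rewrite cardIS (set_partition_big_cond R HP) /=.
under eq_bigr => B _ do rewrite -cardIS.
case: existsP => [[B0 /andP[B0R /eqP c1]] | no].
  rewrite (bigD1 B0) //= c1 oddD /=.
  suff : 2 %| \sum_(i in R | i != B0) #|i :&: S| by rewrite dvdn2 => /negbTE->.
  apply: dvdn_sum => B /andP[BR nB]; apply: even_other => //.
  by apply/negP => /eqP c; move: nB; rewrite (Hu BR B0R c c1) eqxx.
apply/negbTE; rewrite -dvdn2; apply: dvdn_sum => B BR; apply: even_other => //.
by apply/negP => c; apply: no; exists B; rewrite BR.
Qed.
End Parity.

Section Graph.
Variable T : finType.
Variable e : rel T.
Hypothesis esym : symmetric e.
Hypothesis eirr : irreflexive e.
Hypothesis eacy : acyclic e.

Definition e' (a b : T) : rel T :=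
  fun c d => e c d && ~~ (((c == a) && (d == b)) || ((c == b) && (d == a))).

Lemma e'_sym a b : symmetric (e' a b).
Proof.
move=> c d; rewrite /e' esym; congr (_ && ~~ _).
by rewrite orbC; congr (_ || _); rewrite andbC.
Qed.

Definition Sab a b := [set w | connect (e' a b) a w].

Lemma S_step a b w z : w \in Sab a b -> e' a b w z -> z \in Sab a b.
Proof.
by rewrite !inE => Hw Hz; apply: connect_trans Hw (connect1 Hz).
Qed.

Lemma notS a b : e a b -> b \notin Sab a b.
Proof.
move=> eab; rewrite inE; apply/negP => /connectP[p pp lp].
move: lp; case: (shortenP pp) => p' pp' up' _ lp.
have pe : path e a p' by apply: sub_path pp' => c d /andP[].
case: p' pp' up' lp pe => [|y [|z p2]] pp' up' lp pe.
- by move: lp eab => /= <-; rewrite eirr.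
- by move: lp pp' => /= <- /andP[]; rewrite /e' eab !eqxx.
- have := eacy (x:=a) (s:=[:: y, z & p2]) isT.
  by rewrite /gpath pe up' -lp esym eab => /(_ isT).
Qed.

Lemma crossB a b x s : path e x s ->
  (x \in Sab a b) != (last x s \in Sab a b) ->
  consec (x :: s) a b \/ consec (x :: s) b a.
Proof.
elim: s x => [|y s IH] x /=; first by rewrite eqxx.
case/andP=> exy ps.
case: (boolP ((x \in Sab a b) == (y \in Sab a b))) => [/eqP xy | nxy] H.
  have [[l1 [l2 E]]|[l1 [l2 E]]] : consec (y :: s) a b \/ consec (y :: s) b a by apply: IH => //; rewrite -xy.
    by left; exists (x :: l1), l2; rewrite E.
  by right; exists (x :: l1), l2; rewrite E.
have ne' : ~~ e' a b x y.
  apply/negP => ex; move: nxy; case: (boolP (x \in Sab a b)) => xS.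
    by rewrite (S_step xS ex).
  case: (boolP (y \in Sab a b)) => // yS; rewrite e'_sym in ex.
  by rewrite (S_step yS ex) in xS.
move: ne'; rewrite /e' exy /= negbK => /orP[]/andP[/eqP-> /eqP->].
  by left; exists [::], s.
by right; exists [::], s.
Qed.

Lemma path_e' a b x s : path e x s -> (a \notin x :: s) || (b \notin x :: s) ->
  path (e' a b) x s.
Proof.
elim: s x => [//|y s IH] x /= /andP[exy ps] H.
rewrite IH //; last first.
  by move: H; rewrite !inE !negb_or => /orP[]/and3P[_ -> ->]; rewrite ?orbT.
rewrite /e' exy /= andbT.
rewrite !inE !negb_or in H; move: H; apply: contraL => /orP[]/andP[/eqP-> /eqP->];
  by rewrite !eqxx /= ?andbF.
Qed.


Lemma consec_path x s a b : path e x s -> consec (x :: s) a b -> e a b.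
Proof.
move=> ps [[|y l1] [l2 /= [E1 E2]]].
  by move: ps; rewrite E2 -E1 /= => /andP[].
by move: ps; rewrite E2 cat_path => /andP[_ /= /and3P[]].
Qed.

Lemma pre_conn h s l1 a b l2 : path e h s -> uniq (h :: s) ->
  h :: s = l1 ++ a :: b :: l2 -> connect (e' a b) h a.
Proof.
move=> ps us; case: l1 => [[-> _]|y l1 E]; first exact: connect0.
case: E => Eh Es; subst h s.
have E2 : l1 ++ a :: b :: l2 = rcons l1 a ++ b :: l2 by rewrite cat_rcons.
rewrite E2 in ps us.
move: ps; rewrite cat_path => /andP[ps _].
have nb : b \notin y :: rcons l1 a.
  by move: us; rewrite -cat_cons cat_uniq => /and3P[_ /hasPn H _]; apply: H; rewrite inE eqxx.
apply/connectP; exists (rcons l1 a); last by rewrite last_rcons.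
by apply: path_e' => //; rewrite nb orbT.
Qed.

Lemma post_conn h s l1 a b l2 : path e h s -> uniq (h :: s) ->
  h :: s = l1 ++ a :: b :: l2 -> connect (e' a b) b (last h s).
Proof.
move=> ps us E.
have ps' : path e h s by [].
rewrite -(last_cons h) E last_cat /=.
have p2 : path e b l2.
  case: l1 E => [[_ E]|y l1 [_ E]]; move: ps; rewrite E ?cat_path /=.
    by case/andP.
  by case/andP=> _ /= /and3P[].
have na : a \notin b :: l2.
  by move: us; rewrite E cat_uniq => /and3P[_ _ /= /andP[]].
apply/connectP; exists l2 => //.
by apply: path_e' => //; rewrite na.
Qed.


Variables (X : {set T}) (R : {set {set T}}) (f : {set T} -> T * seq T).
Hypothesis HP : partition R X.
Hypothesis H2 : forall B, B \in R -> #|B| = 2.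
Hypothesis Hf1 : forall B, B \in R ->
  gpath e (f B).1 (f B).2 /\ [set (f B).1; last (f B).1 (f B).2] = B.
Hypothesis Hf2 : forall B1 B2, B1 \in R -> B2 \in R -> B1 != B2 ->
  [disjoint ((f B1).1 :: (f B1).2) & ((f B2).1 :: (f B2).2)].

Definition V B := (f B).1 :: (f B).2.

Lemma V_mem_eq B1 B2 w : B1 \in R -> B2 \in R -> w \in V B1 -> w \in V B2 -> B1 = B2.
Proof.
move=> B1R B2R w1 w2; apply/eqP; apply: contraT => ne.
by have := disjointFr (Hf2 B1R B2R ne) w1; rewrite /V in w2; rewrite w2.
Qed.

Lemma ends_ne B : B \in R -> (f B).1 != last (f B).1 (f B).2.
Proof.
move=> BR; have := H2 BR; have [_ E] := Hf1 BR; rewrite -{1}E cards2.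
by case: (_ != _).
Qed.

Lemma cross_card h l (S : {set T}) : h \in S -> l \notin S -> #|[set h; l] :&: S| = 1.
Proof.
move=> hS lS; have -> : [set h; l] :&: S = [set h]; last by rewrite cards1.
apply/setP => w; rewrite !inE; case: (w =P h) => [->|_]; first by rewrite hS.
by case: (w =P l) => [->|_]; rewrite ?(negbTE lS).
Qed.

Lemma cross_sides B (S : {set T}) : B \in R -> #|B :&: S| = 1 ->
  ((f B).1 \in S) != (last (f B).1 (f B).2 \in S).
Proof.
move=> BR; have ne := ends_ne BR; have [_ E] := Hf1 BR.
rewrite -{1}E; set h := (f B).1; set l := last _ _.
case hS: (h \in S); case lS: (l \in S) => //.
  have -> : [set h; l] :&: S = [set h; l].
    apply/setIidPl/subsetP => w; rewrite !inE => /orP[]/eqP->; by rewrite ?hS ?lS.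
  by rewrite cards2 ne.
have -> : [set h; l] :&: S = set0.
  apply/setP => w; rewrite !inE; case: (w =P h) => [->|_]; first by rewrite hS.
  by case: (w =P l) => [->|_]; rewrite ?lS.
by rewrite cards0.
Qed.

Lemma crossing_a a b B : B \in R -> #|B :&: Sab a b| = 1 ->
  consec (V B) a b \/ consec (V B) b a.
Proof.
move=> BR c1; have [/andP[ps _] _] := Hf1 BR.
exact: crossB ps (cross_sides BR c1).
Qed.

Lemma Hu_ab a b B1 B2 : B1 \in R -> B2 \in R ->
  #|B1 :&: Sab a b| = 1 -> #|B2 :&: Sab a b| = 1 -> B1 = B2.
Proof.
move=> B1R B2R c1 c2.
have m1 : a \in V B1 by case: (crossing_a B1R c1) => /consec_mem[].
have m2 : a \in V B2 by case: (crossing_a B2R c2) => /consec_mem[].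
exact: V_mem_eq m1 m2.
Qed.

Lemma charL a b B : B \in R -> consec (V B) a b -> odd #|X :&: Sab a b|.
Proof.
move=> BR C; have [/andP[ps us] E] := Hf1 BR.
have eab : e a b := consec_path ps C.
case: C => l1 [l2 EC].
rewrite (parity HP H2 (@Hu_ab a b)); apply/existsP; exists B; rewrite BR /=.
rewrite -E; apply/eqP/cross_card.
  rewrite inE; rewrite (sym_connect_sym (@e'_sym a b)).
  exact: pre_conn ps us EC.
apply/negP; rewrite inE => Hl.
have Hb := post_conn ps us EC.
move: (notS eab); rewrite inE => /negP; apply.
apply: connect_trans Hl _.
by rewrite (sym_connect_sym (@e'_sym a b)).
Qed.

Lemma charR a b : odd #|X :&: Sab a b| ->
  exists2 B, B \in R & (consec (V B) a b \/ consec (V B) b a).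
Proof.
rewrite (parity HP H2 (@Hu_ab a b)) => /existsP[B /andP[BR /eqP c1]].
by exists B => //; apply: crossing_a.
Qed.

Lemma ends_in B : B \in R -> ((f B).1 \in B) && (last (f B).1 (f B).2 \in B).
Proof.
move=> BR; have [_ E] := Hf1 BR.
have : ((f B).1 \in [set (f B).1; last (f B).1 (f B).2]) &&
       (last (f B).1 (f B).2 \in [set (f B).1; last (f B).1 (f B).2]).
  by rewrite !inE !eqxx orbT.
by rewrite E.
Qed.

Lemma cover_mem w : w \in X -> exists2 B, B \in R & w \in V B.
Proof.
rewrite -(cover_partition HP) => /bigcupP[B BR wB].
exists B => //; have [_ E] := Hf1 BR; move: wB; rewrite -{1}E in_set2 /V.
by case/orP=> /eqP->; rewrite ?mem_head ?mem_last.
Qed.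

Lemma V_ends_X B : B \in R -> ((f B).1 \in X) && (last (f B).1 (f B).2 \in X).
Proof.
move=> BR; have [_ E] := Hf1 BR.
have sub : B \subset X by rewrite -(cover_partition HP); apply: bigcup_sup.
by have /andP[h1 h2] := ends_in BR; rewrite !(subsetP sub).
Qed.

Lemma interior_V B : B \in R -> interior_ok (fun w => w \in X) (V B).
Proof.
move=> BR l1 w l2 E n1 n2; apply/negP => wX.
have [/andP[_ us] EB] := Hf1 BR.
have {}us : uniq (l1 ++ w :: l2) by rewrite -E.
have [B' B'R wB'] := cover_mem wX.
have wB : w \in V B by rewrite E mem_cat mem_head orbT.
have eqB := V_mem_eq B'R BR wB' wB; subst B'.
have wBB : w \in B.
  rewrite -(cover_partition HP) in wX.
  have [/andP[_ U] _] := Hf1 BR.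
  move: wX => /bigcupP[B2 B2R wB2].
  have : w \in V B2.
    by have [_ E2] := Hf1 B2R; move: wB2; rewrite -{1}E2 in_set2 /V => /orP[]/eqP->;
      rewrite ?mem_head ?mem_last.
  by move=> /(V_mem_eq B2R BR) /(_ wB) eq2; rewrite -eq2.
move: wBB; rewrite -EB !inE => /orP[]/eqP Ew.
  case: l1 E n1 us => [//|y l1] [Ey _] _; rewrite -Ew in Ey; subst y.
  by rewrite cat_uniq => /and3P[_ /hasPn H _]; move: (H w); rewrite !inE eqxx => /(_ isT).
case: l2 E n2 us => [//|z l2] E _.
have : last (f B).1 (f B).2 = last z l2.
  by rewrite -(last_cons (f B).1) -/(V B) E last_cat.
rewrite -Ew => ->.
rewrite cat_uniq => /and3P[_ _ /= /andP[H _]]; move: H; apply/negP/negPn.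
exact: mem_last.
Qed.

Lemma orient C x : C \in R -> x \in C ->
  exists t, (x :: t = V C \/ x :: t = rev (V C)) /\ C = [set x; last x t].
Proof.
move=> CR; have [_ E] := Hf1 CR; rewrite -{1}E !inE => /orP[]/eqP->.
  by exists (f C).2; split; [left|].
exists (rev (belast (f C).1 (f C).2)); split.
  by right; rewrite /V [(f C).1 :: _]lastI rev_rcons.
have -> : last (last (f C).1 (f C).2) (rev (belast (f C).1 (f C).2)) = (f C).1.
  by rewrite -(last_cons (f C).1) -rev_rcons -lastI rev_cons last_rcons.
by rewrite setUC.
Qed.

End Graph.

Lemma subPQ (T : finType) (e : rel T) (X : {set T}) (P Q : {set {set T}}) :
  is_tree e -> pair_partition X P -> feasible e P ->
  pair_partition X Q -> feasible e Q -> P \subset Q.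
Proof.
move=> [[esym eirr] [_ eacy]] [HP H2P] [f [Hf1 Hf2]] [HQ H2Q] [g [Hg1 Hg2]].
apply/subsetP => B BR.
have [/andP[ps us] EB] := Hf1 B BR.
have /andP[hX lX] := V_ends_X HP Hf1 BR.
have [C CQ hC] : exists2 C, C \in Q & (f B).1 \in C.
  by move: hX; rewrite -(cover_partition HQ) => /bigcupP[C CQ hC]; exists C.
have [t [Et EC]] := orient Hg1 CQ hC.
set O : rel T := fun c d =>
  (e c d && odd #|X :&: Sab e c d|) || (e d c && odd #|X :&: Sab e d c|).
have Hs : forall w d, w \in (f B).1 :: (f B).2 -> O w d ->
    consec ((f B).1 :: (f B).2) w d \/ consec ((f B).1 :: (f B).2) d w.
  move=> w d wB /orP[]/andP[_ od].
    have [B' B'R H] := charR esym HP H2P Hf1 Hf2 od.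
    have wB' : w \in V f B' by case: H => /consec_mem[].
    by rewrite -(V_mem_eq Hf2 B'R BR wB' wB).
  have [B' B'R H] := charR esym HP H2P Hf1 Hf2 od.
  have wB' : w \in V f B' by case: H => /consec_mem[].
  by rewrite -(V_mem_eq Hf2 B'R BR wB' wB); case: H; [right|left].
have [/andP[pg ug] _] := Hg1 C CQ.
have Ht : forall c d, consec ((f B).1 :: t) c d -> O c d.
  move=> c d; case: Et => ->.
    move=> H; apply/orP; left; rewrite (consec_path pg H) /=.
    exact (charL esym eirr eacy HQ H2Q Hg1 Hg2 CQ H).
  move=> /consec_rev; rewrite revK => H; apply/orP; right.
  rewrite (consec_path pg H) /=.
  exact (charL esym eirr eacy HQ H2Q Hg1 Hg2 CQ H).
have Ut : uniq ((f B).1 :: t) by case: Et => ->; rewrite ?rev_uniq.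
have It : interior_ok (fun w => w \in X) ((f B).1 :: t).
  by have IV := interior_V HQ Hg1 Hg2 CQ; case: Et => ->; [|apply: interior_rev].
have tX : last (f B).1 t \in X.
  have sub : C \subset X by rewrite -(cover_partition HQ); apply: bigcup_sup.
  by apply: (subsetP sub); rewrite EC !inE eqxx orbT.
have tne : last (f B).1 t != (f B).1.
  by have := H2Q C CQ; rewrite EC cards2 eq_sym; case: (_ != _).
have sne : last (f B).1 (f B).2 != (f B).1 by rewrite eq_sym; exact (ends_ne H2P Hf1 BR).
have := walk us Ut Hs Ht (interior_V HP Hf1 Hf2 BR) It lX tX sne tne.
by move=> El; rewrite -EB El -EC.
Qed.

Theorem mainTheorem3 (T : finType) (e : rel T) (X : {set T})
    (P Q : {set {set T}}) :
  is_tree e -> ~~ odd #|X| ->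
  pair_partition X P -> feasible e P ->
  pair_partition X Q -> feasible e Q ->
  P = Q.
Proof.
move=> tr _ pP fP pQ fQ; apply/eqP; rewrite eqEsubset.
by rewrite (subPQ tr pP fP pQ fQ) (subPQ tr pQ fQ pP fP).
Qed.
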